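(* Let $n\in\mathbb N$. Then there exists $k_0\in\mathbb N$ such that for all $k,j\in\mathbb N$ with $j\ge k\ge k_0$, $$p^{(j)}_n\le p^{(k)}_n\,\log^{(j-k+1)\log(j-k+1)}p^{(k)}_n.$$
   Context: Let $p_n$ denote the $n$-th prime number. Define $p^{(0)}_n=n$ and recursively $p^{(k+1)}_n=p_{p^{(k)}_n}$ for $k\in\mathbb N_0$. $\log$ is the natural logarithm and $\log^{t}y=(\log y)^t$. *)

(* Defs.v *)
From Stdlib Require Import Reals.
From mathcomp Require Import ssreflect ssrfun ssrbool eqtype ssrnat prime.

Set Implicit Arguments.
Unset Strict Implicit.

Lemma ex_prime_above (m : nat) : exists p, (m < p) && prime p.
Proof. case: (prime_above m) => p H1 H2; exists p; by rewrite H1 H2. Qed.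

Definition next_prime (m : nat) : nat := ex_minn (ex_prime_above m).

(* p_n, the n-th prime, 1-indexed: p_1 = 2, p_2 = 3, ...  (p_0 = 1 is junk) *)
Definition nth_prime (n : nat) : nat := iter n next_prime 1.

Definition iter_prime (k n : nat) : nat := iter k nth_prime n.

(* Main.v *)
Require Import Defs.
From Stdlib Require Import Reals Lra ZArith.
From mathcomp Require Import ssreflect ssrfun ssrbool eqtype ssrnat seq prime bigop binomial div.
From mathcomp Require Import zify.
Set Warnings "-notation-overridden".

Lemma next_primeP m : [/\ m < next_prime m, prime (next_prime m) &
  forall q, m < q -> q < next_prime m -> ~~ prime q].
Proof.
rewrite /next_prime; case: ex_minnP => p /andP[h1 h2] hmin; split => // q hq1 hq2.
apply/negP => pq; have := hmin q; rewrite hq1 pq => /(_ isT); rewrite leqNgt hq2.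
by [].
Qed.

Definition pic (X : nat) := \sum_(0 <= p < X.+1) (prime p : nat).

Lemma picS X : pic X.+1 = pic X + prime X.+1.
Proof. by rewrite /pic big_nat_recr. Qed.

Lemma pic_mono X Y : X <= Y -> pic X <= pic Y.
Proof.
elim: Y => [|Y IH]; first by rewrite leqn0 => /eqP ->.
rewrite leq_eqVlt => /orP[/eqP -> //| h]. rewrite picS.
apply: leq_trans (IH h) _; exact: leq_addr.
Qed.

Lemma pic_gap x y : x <= y -> y < next_prime x -> pic y = pic x.
Proof.
case: (next_primeP x) => _ _ hq.
elim: y => [|y IH]; first by rewrite leqn0 => /eqP ->.
rewrite leq_eqVlt => /orP[/eqP -> //| h] h2.
rewrite picS IH //; last by apply: ltnW.
by rewrite (negbTE (hq _ h h2)) addn0.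
Qed.

Lemma pic_next x : pic (next_prime x) = (pic x).+1.
Proof.
case: (next_primeP x) => h1 h2 _.
have -> : next_prime x = (next_prime x).-1.+1 by rewrite prednK //; apply: leq_ltn_trans h1.
rewrite picS prednK; last by apply: leq_ltn_trans h1.
rewrite h2 (@pic_gap x) ?addn1 //.
  by rewrite -ltnS prednK //; apply: leq_ltn_trans h1.
by rewrite prednK //; apply: leq_ltn_trans h1.
Qed.

Lemma nth_primeS m : nth_prime m.+1 = next_prime (nth_prime m).
Proof. by []. Qed.

Lemma pic_nth m : pic (nth_prime m) = m.
Proof.
elim: m => [|m IH]; first by rewrite /nth_prime /= (picS 0) /pic big_nat1.
by rewrite nth_primeS pic_next IH.
Qed.

Lemma nth_prime_le m X : 0 < m -> m <= pic X -> nth_prime m <= X.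
Proof.
case: m => // m _ hm; rewrite nth_primeS; rewrite leqNgt; apply/negP => hX.
case: (leqP (nth_prime m) X) => h.
  by move: hm; rewrite (@pic_gap _ X h hX) pic_nth ltnn.
have h1 := @pic_mono _ _ (ltnW h); rewrite pic_nth in h1.
by have := leq_trans hm h1; rewrite ltnn.
Qed.

Lemma nth_prime_gt m : m < nth_prime m.
Proof.
elim: m => [|m IH]; first by [].
rewrite nth_primeS; case: (next_primeP (nth_prime m)) => h _ _.
exact: leq_ltn_trans IH h.
Qed.

Lemma bin_lb t : 2 ^ t <= 'C(2 * t, t).
Proof.
elim: t => [|t IH]; first by [].
have e : 'C(2 * t.+1, t.+1) = 2 * 'C((2 * t).+1, t).
  apply/eqP; rewrite -(eqn_pmul2l (ltn0Sn t)).
  have := mul_bin_diag (2 * t.+1) t.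
  have -> : (2 * t.+1).-1 = (2 * t).+1 by lia.
  move=> <-; apply/eqP; lia.
have h2 : 'C(2 * t, t) <= 'C((2 * t).+1, t).
  case: t {IH e} => [|s]; first by [].
  by rewrite binS leq_addr.
rewrite e expnS leq_mul2l /=; exact: leq_trans IH h2.
Qed.
Lemma div_term t q : 0 < q -> (2 * t) %/ q <= 2 * (t %/ q) + (q <= 2 * t).
Proof.
move=> q0; case: (leqP q (2 * t)) => h.
  have e : 2 * t = (2 * (t %/ q)) * q + 2 * (t %% q).
    by rewrite {1}(divn_eq t q); lia.
  rewrite e divnMDl // leq_add2l.
  have := ltn_pmod t q0 => hr.
  by rewrite -ltnS ltn_divLR //; lia.
by rewrite divn_small.
Qed.

Lemma fact_ext p t : prime p ->
  \sum_(1 <= k < t.+1) t %/ p ^ k = \sum_(1 <= k < (2 * t).+1) t %/ p ^ k.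
Proof.
move=> pp; rewrite (@big_cat_nat _ _ _ t.+1 1 (2 * t).+1) //=; last by lia.
suff -> : \sum_(t.+1 <= k < (2 * t).+1) t %/ p ^ k = 0 by rewrite addn0.
rewrite big_nat_cond big1 // => k /andP[/andP[h1 h2] _].
apply: divn_small; apply: leq_trans h1 _; apply: ltnW; apply: ltn_expl.
exact: prime_gt1.
Qed.

Lemma sum_ind p N : 1 < p -> 0 < N ->
  \sum_(1 <= k < N.+1) (p ^ k <= N : nat) <= trunc_log p N.
Proof.
move=> p1 N0; set T := trunc_log p N.
have hT : T <= N.
  apply: ltnW; exact: leq_trans (ltn_expl T p1) (trunc_logP p1 N0).
rewrite (@big_cat_nat _ _ _ T.+1 1 N.+1) //=.
suff -> : \sum_(T.+1 <= k < N.+1) (p ^ k <= N : nat) = 0.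
  rewrite addn0.
  have : \sum_(1 <= k < T.+1) (p ^ k <= N : nat) <= \sum_(1 <= k < T.+1) 1.
    by apply: leq_sum => k _; exact: leq_b1.
  by rewrite sum_nat_const_nat subn1 /= muln1.
rewrite big_nat_cond big1 // => k /andP[/andP[h1 h2] _]; apply/eqP; rewrite eqb0 -ltnNge.
apply: leq_trans (trunc_log_ltn N p1) _; exact: leq_pexp2l (ltnW p1) h1.
Qed.

Lemma logn_bin p t : prime p -> 0 < t -> p ^ logn p 'C(2 * t, t) <= 2 * t.
Proof.
move=> pp t0; have p1 := prime_gt1 pp.
have N0 : 0 < 2 * t by lia.
have hf := @bin_fact (2 * t) t (leq_pmull t (isT : 0 < 2)).
have e : 2 * t - t = t by lia.
rewrite e in hf.
have hl := congr1 (logn p) hf.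
rewrite !lognM ?muln_gt0 ?fact_gt0 ?bin_gt0 ?leq_pmull // in hl.
rewrite !logn_fact // fact_ext // in hl.
have hs : \sum_(1 <= k < (2 * t).+1) (2 * t) %/ p ^ k <=
   2 * (\sum_(1 <= k < (2 * t).+1) t %/ p ^ k) + \sum_(1 <= k < (2 * t).+1) (p ^ k <= 2 * t : nat).
  rewrite big_distrr /= -big_split /=; apply: leq_sum => k _; apply: div_term.
  by rewrite expn_gt0 (ltnW p1).
have hi := @sum_ind _ _ p1 N0.
have hle : logn p 'C(2 * t, t) <= trunc_log p (2 * t) by lia.
apply: leq_trans (trunc_logP p1 N0); exact: leq_pexp2l (ltnW p1) hle.
Qed.

Lemma prod_if X c : \prod_(0 <= p < X.+1) (if prime p then c else 1) = c ^ pic X.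
Proof.
elim: X => [|X IH]; first by rewrite /pic !big_nat1.
by rewrite big_nat_recr //= IH picS expnD; case: (prime X.+1); rewrite ?muln1 ?expn1.
Qed.

Lemma bin_ub t : 0 < t -> 'C(2 * t, t) <= (2 * t) ^ pic (2 * t).
Proof.
move=> t0; set C := 'C(2 * t, t); set N := 2 * t.
have C0 : 0 < C by rewrite bin_gt0; lia.
have N0 : 0 < N by lia.
rewrite -{1}(partnT C0) (@widen_partn (C + N)) ?leq_addr //.
rewrite (@big_cat_nat _ _ _ N.+1 0 (C + N).+1) //=; last by rewrite ltnS leq_addl.
have np : forall p, ~~ prime p -> logn p C = 0.
  by move=> p np; rewrite lognE (negbTE np).
suff -> : \prod_(N.+1 <= p < (C + N).+1 | p \in predT) p ^ logn p C = 1.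
  rewrite muln1 -prod_if; apply: leq_prod => p _.
  case: (boolP (prime p)) => pp; last by rewrite np.
  exact: logn_bin.
rewrite big_nat_cond big1 // => p /andP[/andP[h1 h2] _].
case: (boolP (prime p)) => pp; last by rewrite np.
have := @logn_bin _ _ pp t0; rewrite -/C -/N => h.
have : p ^ logn p C < p ^ 1 by rewrite expn1; exact: leq_ltn_trans h h1.
rewrite ltn_exp2l ?prime_gt1 // ltnS leqn0 => /eqP ->; by [].
Qed.

Lemma cheb m t : 0 < m -> 0 < t -> (2 * t) ^ m <= 2 ^ t -> nth_prime m <= 2 * t.
Proof.
move=> m0 t0 h; apply: nth_prime_le => //.
have h2 := leq_trans h (leq_trans (bin_lb t) (@bin_ub _ t0)).
by rewrite leq_exp2l in h2; lia.
Qed.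
Section RealFacts.
Local Open Scope R_scope.

Lemma ln_le_id x : 0 < x -> ln x <= x - 1.
Proof. move=> hx; have := exp_ineq1_le (ln x); rewrite exp_ln //; lra. Qed.

Lemma ln_mono x y : 0 < x -> x <= y -> ln x <= ln y.
Proof.
move=> hx [h|->]; last by lra.
by apply: Rlt_le; apply: ln_increasing.
Qed.

Lemma exp_mono x y : x <= y -> exp x <= exp y.
Proof. move=> [h|->]; last lra. by apply: Rlt_le; apply: exp_increasing. Qed.

Lemma ln2_ge : 5/8 <= ln 2.
Proof.
have h3 : 1 <= ln 3.
  rewrite -{1}(ln_exp 1); apply: ln_mono; [exact: exp_pos | exact: exp_le_3].
have h34 := @ln_le_id (3/4) ltac:(lra).
have e1 : ln 3 = ln (3/4) + ln 4 by rewrite -ln_mult; try lra; f_equal; lra.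
have e2 : ln 4 = ln 2 + ln 2 by rewrite -ln_mult; try lra; f_equal; lra.
lra.
Qed.

Lemma nat_ceil x : 0 <= x -> exists t : nat, x <= INR t <= x + 1.
Proof.
move=> hx; case: (archimed x) => h1 h2.
have hz : (0 <= up x)%Z.
  apply: le_IZR; lra.
exists (Z.to_nat (up x)); rewrite INR_IZR_INZ Z2Nat.id //; lra.
Qed.

Lemma expn_pow (a b : nat) : (a ^ b)%N = Nat.pow a b.
Proof. elim: b => [|b IH] //=; by rewrite expnS IH mulnE. Qed.

Lemma step m : exp 27 <= INR m -> INR (nth_prime m) <= 9 * INR m * ln (INR m).
Proof.
move=> hm.
have m0 : (0 < m)%N by case: m hm => [|m'] //=; have := exp_pos 27; lra.
have ex27 : 28 <= exp 27 by have := exp_ineq1_le 27; lra.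
have hx : 0 < INR m by lra.
have hL : 27 <= ln (INR m).
  rewrite -(ln_exp 27); apply: ln_mono => //; exact: exp_pos.
set x := INR m in hm hx hL *. set L := ln x in hL *.
have hxL : 27 * x <= x * L by nra.
case: (nat_ceil (4 * x * L)) => [|t [ht1 ht2]]; first nra.
have t0 : (0 < t)%N by case: t ht1 ht2 => [|t'] //= ? ?; nra.
have e2 : INR 2 = 2 by rewrite /=; lra.
have key : ((2 * t) ^ m <= 2 ^ t)%N.
  apply/leP; apply: INR_le; rewrite !expn_pow !pow_INR mulnE mult_INR e2.
  have ha : 0 < 2 * INR t by nra.
  rewrite -(exp_ln ((2 * INR t) ^ m)); last by apply: pow_lt.
  rewrite -(exp_ln (2 ^ t)); last by apply: pow_lt; lra.
  rewrite !ln_pow //; last lra.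
  apply: exp_mono; rewrite -/x.
  have hL0 : 0 < L by lra.
  have h10 : ln 10 <= 9 by have := @ln_le_id 10 ltac:(lra); lra.
  have hlL : ln L <= L - 1 by apply: ln_le_id.
  have hla : ln (2 * INR t) <= ln 10 + L + ln L.
    rewrite -!ln_mult; try nra. apply: ln_mono => //; nra.
  have h2 := ln2_ge.
  have : x * ln (2 * INR t) <= x * (2 * L + 8) by apply: Rmult_le_compat_l; lra.
  have : INR t * ln 2 >= 4 * x * L * (5/8) by apply: Rle_ge; apply: Rmult_le_compat; nra.
  nra.
have := @cheb _ _ m0 t0 key => /leP /le_INR; rewrite mulnE mult_INR e2 -/x => h.
nra.
Qed.

Lemma Dgap (D : R) : 0 <= D ->
  ln (D + 2) + 1/2 <= (D + 2) * ln (D + 2) - (D + 1) * ln (D + 1).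
Proof.
move=> hD; set q := (D + 1) / (D + 2).
have hq : q * (D + 2) = D + 1 by rewrite /q; field; lra.
have hq0 : 0 < q by rewrite /q; apply: Rdiv_lt_0_compat; lra.
have hq2 : 1/2 <= q by apply: (Rmult_le_reg_r (D + 2)); lra.
have e : ln (D + 1) = ln q + ln (D + 2) by rewrite -ln_mult; try lra; f_equal; lra.
have hl := @ln_le_id q hq0.
have : (D + 1) * ln q <= (D + 1) * (q - 1) by apply: Rmult_le_compat_l; lra.
rewrite e; nra.
Qed.

Lemma KEY (D l : R) : 0 <= D -> 100 <= l ->
  9 * (exp l + (D + 1) * ln (D + 1) * l) <=
  exp (((D + 2) * ln (D + 2) - (D + 1) * ln (D + 1)) * l).
Proof.
move=> hD hl.
set u := ln (D + 2).
have hu : 5/8 <= u by apply: Rle_trans ln2_ge _; apply: ln_mono; lra.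
have hE0 : 0 <= ln (D + 1) by rewrite -ln_1; apply: ln_mono; lra.
have hE1 : ln (D + 1) <= D by have := @ln_le_id (D + 1) ltac:(lra); lra.
have hle : l <= exp l by have := exp_ineq1_le l; lra.
have hexp0 := exp_pos l.
have h1 : 9 * (exp l + (D + 1) * ln (D + 1) * l) <= 9 * ((D + 2) * (D + 2)) * exp l.
  have ha : (D + 1) * ln (D + 1) <= (D + 1) * D by apply: Rmult_le_compat_l; lra.
  have : (D + 1) * ln (D + 1) * l <= (D + 1) * D * exp l.
    apply: Rmult_le_compat; try lra; apply: Rmult_le_pos; lra.
  nra.
have e2 : 9 * ((D + 2) * (D + 2)) * exp l = exp (ln 9 + (u + u) + l).
  rewrite !exp_plus /u !exp_ln; lra.
apply: Rle_trans h1 _; rewrite e2; apply: exp_mono.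
have h9 : ln 9 <= 8 by have := @ln_le_id 9 ltac:(lra); lra.
have hg := @Dgap D hD; rewrite -/u in hg.
have : (u + 1/2) * l <= ((D + 2) * u - (D + 1) * ln (D + 1)) * l.
  apply: Rmult_le_compat_r; lra.
nra.
Qed.

End RealFacts.

Lemma iter_primeS k n : iter_prime k.+1 n = nth_prime (iter_prime k n).
Proof. by []. Qed.

Lemma iter_prime_ge k n : (k <= iter_prime k n)%N.
Proof.
elim: k => [|k IH] //; rewrite iter_primeS; exact: leq_ltn_trans IH (nth_prime_gt _).
Qed.

Lemma iter_prime_mono k d n : (iter_prime k n <= iter_prime (k + d) n)%N.
Proof.
elim: d => [|d IH]; first by rewrite addn0.
rewrite addnS iter_primeS; apply: leq_trans IH (ltnW (nth_prime_gt _)).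
Qed.

Section Chain.
Local Open Scope R_scope.

Lemma chain n k : exp (exp 100) <= INR (iter_prime k n) -> forall d,
  INR (iter_prime (k + d) n) <=
  INR (iter_prime k n) * exp ((INR d + 1) * ln (INR d + 1) * ln (ln (INR (iter_prime k n)))).
Proof.
set X := INR (iter_prime k n) => hX.
have e100 : 101 <= exp 100 by have := exp_ineq1_le 100; lra.
have hX0 : 0 < X by have := exp_pos (exp 100); lra.
have hL : exp 100 <= ln X by rewrite -(ln_exp (exp 100)); apply: ln_mono => //; exact: exp_pos.
have hl : 100 <= ln (ln X) by rewrite -(ln_exp 100); apply: ln_mono => //; exact: exp_pos.
set L := ln X in hL hl *. set l := ln L in hl *.
have eL : L = exp l by rewrite /l exp_ln //; lra.
elim => [|d IH].
  rewrite addn0 /= Rplus_0_l ln_1 Rmult_0_r Rmult_0_l exp_0 -/X; lra.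
rewrite addnS iter_primeS.
set y := INR (iter_prime (k + d) n) in IH *.
have hyX : X <= y by apply: le_INR; apply/leP; exact: iter_prime_mono.
have hy27 : exp 27 <= y.
  apply: (Rle_trans _ _ _ _ hyX); apply: (Rle_trans _ _ _ _ hX); apply: exp_mono; lra.
have hs := @step _ hy27; rewrite -/y in hs.
set E := (INR d + 1) * ln (INR d + 1) in IH *.
have hy0 : 0 < y by lra.
have hly0 : 0 <= ln y by rewrite -ln_1; apply: ln_mono; try lra; have := exp_ineq1_le 27; lra.
have hly : ln y <= L + E * l.
  apply: (Rle_trans _ _ _ (@ln_mono _ _ hy0 IH)).
  rewrite ln_mult ?ln_exp /L; try lra; exact: exp_pos.
have h1 : 9 * y * ln y <= 9 * (X * exp (E * l)) * (L + E * l).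
  apply: Rmult_le_compat; try lra; apply: Rmult_le_pos; lra.
have hk := @KEY (INR d) l (pos_INR d) ltac:(lra).
rewrite -eL -/E in hk.
rewrite S_INR (_ : INR d + 1 + 1 = INR d + 2); last lra.
set E' := (INR d + 2) * ln (INR d + 2).
rewrite (_ : E' * l = E * l + (E' - E) * l); last ring.
rewrite exp_plus.
have hexp := exp_pos (E * l).
apply: (Rle_trans _ _ _ hs); apply: (Rle_trans _ _ _ h1).
rewrite /E' /E; rewrite /E in hk.
set A := exp (_ * l) in hexp *. set B := exp (_ * l) in hk *.
have hXA : 0 <= X * A by apply: Rmult_le_pos; lra.
have := Rmult_le_compat_l _ _ _ hXA hk.
set M := L + _ * l. move=> h. lra.
Qed.

End Chain.

Theorem theorem9 (n : nat) (hn : (1 <= n)%nat) :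
  exists k0 : nat, forall k j : nat, (k0 <= k)%nat -> (k <= j)%nat ->
    (INR (iter_prime j n) <=
     INR (iter_prime k n) *
     Rpower (ln (INR (iter_prime k n)))
            (INR (j - k + 1) * ln (INR (j - k + 1))))%R.
Proof.
case: (@nat_ceil (exp (exp 100))) => [|k0 [hk0 _]]; first by apply: Rlt_le; apply: exp_pos.
exists k0 => k j hk hj.
have [d ->] : exists d, j = (k + d)%N by exists (j - k)%N; rewrite subnKC.
have -> : (k + d - k + 1)%N = d.+1 by lia.
have hX : (exp (exp 100) <= INR (iter_prime k n))%R.
  apply: Rle_trans hk0 _; apply: le_INR; apply/leP.
  exact: leq_trans hk (iter_prime_ge k n).
rewrite S_INR /Rpower.
have := @chain n k hX d.
by rewrite Rmult_assoc.
Qed.
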